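(* Assume $k>1$. (1) $r=e-k$ if and only if $v(R)\setminus v(xR:\mathfrak m)=\{0,y_1,\dots,y_{k-1}\}$. (2) If $r<e-1$, then (a) $2y_1<c+e$, and (b) $p\le 2l_1+2$, and $p=2l_1+2$ implies $h>0$. (3) If $r=e-k$, then (a) $y_1+y_j<c+e$ for every $j=1,\dots,k-1$, and (b) $p\le l_1+l_{k-1}+2$, and $p=l_1+l_{k-1}+2$ implies $h>0$. (4) If $p\ge3$ and $i$ is such that $l_i=0$, then $2y_i>c+e$.
   Context: Let $(R,\mathfrak m)$ be a one-dimensional local Noetherian domain with quotient field $K$, not regular, analytically irreducible (the integral closure $\overline R$ of $R$ in $K$ is a DVR and a finite $R$-module) and residually rational. Let $v$ be the valuation of $\overline R$ normalized so a uniformizer $t$ has value 1, $v(R)=\{v(a):a\in R\setminus\{0\}\}$, $\mathfrak C=(R:_K\overline R)=t^c\overline R$ with $c$ the least element of $v(R)$ with $c+\mathbb N\subseteq v(R)$, $r=\ell_R((R:_K\mathfrak m)/R)$, $e$ the least positive element of $v(R)$. Let $x\in\mathfrak m$ with $v(x)=e$, $k=\ell_R(R/(\mathfrak C+xR))$, $(xR:\mathfrak m)=\{a\in K:a\mathfrak m\subseteq xR\}$ (an ideal of $R$) with value set $v(xR:\mathfrak m)$. When $k>1$: $p$ is the integer with $c-e\le pe<c$, $h=(p+1)e-c$; $y_1<\dots<y_{k-1}$ are the nonzero elements of $v(R)\setminus v(\mathfrak C+xR)$ (equivalently the $y\in v(R)$ with $0<y<c$ and $y-e\notin v(R)$); $l_i\ge0$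 is the integer with $y_i+l_ie<c\le y_i+(l_i+1)e$. *)

(* Defs.v *)
From HB Require Import structures.
From mathcomp Require Import all_boot all_order all_algebra.
Set Implicit Arguments. Unset Strict Implicit. Unset Printing Implicit Defensive.
Import Order.TTheory GRing.Theory Num.Theory.
Local Open Scope ring_scope.

(* v is a discrete valuation of K normalized so that some t has value 1
   (the value v 0 is irrelevant and never used). *)
Definition is_dval (K : fieldType) (v : K -> int) : Prop :=
  [/\ (forall a b, a != 0 -> b != 0 -> v (a * b) = v a + v b),
      (forall a b, a != 0 -> b != 0 -> a + b != 0 ->
          Num.min (v a) (v b) <= v (a + b)) &
      (exists t, t != 0 /\ v t = 1)].

(* the valuation ring of v (this is \overline R, a DVR) *)
Definition valring (K : fieldType) (v : K -> int) : K -> Prop :=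
  fun a => a = 0 \/ 0 <= v a.

Definition is_subring (K : fieldType) (R : K -> Prop) : Prop :=
  [/\ R 0, R 1, (forall a b, R a -> R b -> R (a - b)) &
      (forall a b, R a -> R b -> R (a * b))].

Definition fin_gen_module (K : fieldType) (R M : K -> Prop) : Prop :=
  exists s : seq K, (forall g, g \in s -> M g) /\
    forall a, M a -> exists f : nat -> K,
      (forall i, R (f i)) /\ a = \sum_(i < size s) f i * s`_i.

(* The standing setting: R is a subring of the DVR \overline R = valring v,
   with quotient field K, \overline R finite over R, R <> \overline R
   (not regular), and residually rational. *)
Definition setting (K : fieldType) (v : K -> int) (R : K -> Prop) : Prop :=
  [/\ is_dval v, is_subring R, (forall a, R a -> valring v a),
      (forall z, exists a b, [/\ R a, R b, b != 0 & z = a / b]) &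
      [/\ fin_gen_module R (valring v),
          (exists a, valring v a /\ ~ R a) &
          (forall a, valring v a -> exists b, R b /\ (a - b = 0 \/ 0 < v (a - b)))]].

(* maximal ideal of R: R ∩ (maximal ideal of \overline R) *)
Definition maxid (K : fieldType) (v : K -> int) (R : K -> Prop) : K -> Prop :=
  fun a => R a /\ (a = 0 \/ 0 < v a).

Definition colon (K : fieldType) (I J : K -> Prop) : K -> Prop :=
  fun a => forall b, J b -> I (a * b).

Definition conductor (K : fieldType) (v : K -> int) (R : K -> Prop) : K -> Prop :=
  colon R (valring v).

Definition principal (K : fieldType) (R : K -> Prop) (x : K) : K -> Prop :=
  fun a => exists b, R b /\ a = x * b.

Definition sumset (K : fieldType) (I J : K -> Prop) : K -> Prop :=
  fun a => exists b d, [/\ I b, J d & a = b + d].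

Definition vset (K : fieldType) (v : K -> int) (I : K -> Prop) : int -> Prop :=
  fun z => exists a, [/\ I a, a != 0 & v a = z].

Definition is_submod (K : fieldType) (R M : K -> Prop) : Prop :=
  [/\ M 0, (forall a b, M a -> M b -> M (a + b)) &
      (forall r a, R r -> M a -> M (r * a))].

Definition is_chain (K : fieldType) (R J I : K -> Prop) (n : nat)
    (f : nat -> K -> Prop) : Prop :=
  [/\ (forall a, f 0%N a <-> J a), (forall a, f n a <-> I a),
      (forall i, (i <= n)%N -> is_submod R (f i)) &
      (forall i, (i < n)%N ->
         (forall a, f i a -> f i.+1 a) /\ exists a, f i.+1 a /\ ~ f i a)].

(* length of the R-module I/J (J ⊆ I submodules of K) is n:
   the maximal length of a strict chain of submodules between J and I *)
Definition module_length (K : fieldType) (R I J : K -> Prop) (n : nat) : Prop :=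
  (exists f, is_chain R J I n f) /\
  (forall m f, is_chain R J I m f -> (m <= n)%N).

(* Main.v *)
Require Import Defs.
From HB Require Import structures.
From mathcomp Require Import all_boot all_order all_algebra.
From mathcomp Require Import zify ring lra.
From Stdlib Require Import ClassicalEpsilon.
Set Implicit Arguments. Unset Strict Implicit. Unset Printing Implicit Defensive.
Import Order.TTheory GRing.Theory Num.Theory.
Local Open Scope ring_scope.

Lemma v1 (K : fieldType) (v : K -> int) : is_dval v -> v 1 = 0.
Proof.
case=> hm _ _; have := hm 1 1 (oner_neq0 _) (oner_neq0 _); rewrite mulr1.
lia.
Qed.

Lemma vM (K : fieldType) (v : K -> int) a b : is_dval v -> a != 0 -> b != 0 -> v (a * b) = v a + v b.
Proof. by case=> hm _ _; apply: hm. Qed.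

Lemma vV (K : fieldType) (v : K -> int) a : is_dval v -> a != 0 -> v a^-1 = - v a.
Proof.
move=> hv a0; have := vM hv a0 (invr_neq0 a0); rewrite mulfV // v1 //; lia.
Qed.

Lemma vN (K : fieldType) (v : K -> int) a : is_dval v -> v (- a) = v a.
Proof.
move=> hv; case: (eqVneq a 0) => [->|a0]; first by rewrite oppr0.
have m10 : (-1 : K) != 0 by rewrite oppr_eq0 oner_neq0.
have h1 : v (-1) = 0.
  have := vM hv m10 m10; rewrite mulrNN mulr1 v1 //; lia.
by rewrite -mulN1r vM // h1 add0r.
Qed.

Lemma vDmin (K : fieldType) (v : K -> int) a b : is_dval v -> a != 0 -> b != 0 -> a + b != 0 ->
  Num.min (v a) (v b) <= v (a + b).
Proof. by case=> _ hd _; apply: hd. Qed.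

Lemma vDge (K : fieldType) (v : K -> int) a b (s : int) : is_dval v -> a + b != 0 ->
  (a = 0 \/ s <= v a) -> (b = 0 \/ s <= v b) -> s <= v (a + b).
Proof.
move=> hv ab0 ha hb.
case: (eqVneq a 0) => [a0|a0].
  by move: hb ab0; rewrite a0 add0r => -[->|//]; rewrite eqxx.
case: (eqVneq b 0) => [b0|b0].
  by move: ha ab0; rewrite b0 addr0 => -[->|//]; rewrite eqxx.
case: ha => [/eqP|ha]; first by rewrite (negbTE a0).
case: hb => [/eqP|hb]; first by rewrite (negbTE b0).
apply: le_trans (vDmin hv a0 b0 ab0); by rewrite le_min ha hb.
Qed.

Lemma vDlt (K : fieldType) (v : K -> int) a b : is_dval v -> a != 0 ->
  (b = 0 \/ v a < v b) -> a + b != 0 /\ v (a + b) = v a.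
Proof.
move=> hv a0 [->|hb]; first by rewrite addr0.
case: (eqVneq b 0) => [b0|b0]; first by rewrite b0 addr0.
have ab0 : a + b != 0.
  apply/eqP=> ab; have : b = - a by apply/eqP; rewrite -addr_eq0 addrC ab.
  by move=> bE; move: hb; rewrite bE vN // ltxx.
split=> //.
have h1 : v a <= v (a + b) by apply: vDge => //; [right | right; lia].
have nb0 : - b != 0 by rewrite oppr_eq0.
have := vDmin hv ab0 nb0; rewrite addrK vN //.
move=> h2; apply/eqP; rewrite eq_le h1 andbT.
move: h2; rewrite ge_min => /(_ a0); case/orP => //; lia.
Qed.

Lemma Ropp (K : fieldType) (R : K -> Prop) a : is_subring R -> R a -> R (- a).
Proof. by case=> h0 _ hs _ ha; rewrite -sub0r; apply: hs. Qed.

Lemma RB (K : fieldType) (R : K -> Prop) a b : is_subring R -> R a -> R b -> R (a - b).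
Proof. by case=> _ _ hs _; apply: hs. Qed.

Lemma RD (K : fieldType) (R : K -> Prop) a b : is_subring R -> R a -> R b -> R (a + b).
Proof. move=> hR ha hb; rewrite -[b]opprK; apply: RB => //; exact: Ropp. Qed.

Lemma RM (K : fieldType) (R : K -> Prop) a b : is_subring R -> R a -> R b -> R (a * b).
Proof. by case=> _ _ _ hm; apply: hm. Qed.

Lemma R0 (K : fieldType) (R : K -> Prop) : is_subring R -> R 0.
Proof. by case. Qed.

Lemma R1 (K : fieldType) (R : K -> Prop) : is_subring R -> R 1.
Proof. by case. Qed.



Lemma Msub (K : fieldType) (R M : K -> Prop) a b l : is_subring R -> is_submod R M ->
  M a -> M b -> R l -> M (a - l * b).
Proof.
move=> hR [_ hadd hsc] ha hb hl; apply: hadd => //; rewrite -mulNr; apply: hsc => //; exact: Ropp.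
Qed.

Lemma MD (K : fieldType) (R M : K -> Prop) a b l : is_subring R -> is_submod R M ->
  M a -> M b -> R l -> M (a + l * b).
Proof. by move=> hR [_ hadd hsc] ha hb hl; apply: hadd => //; apply: hsc. Qed.

Definition resid (K : fieldType) (v : K -> int) (R : K -> Prop) :=
  forall a, valring v a -> exists b, R b /\ (a - b = 0 \/ 0 < v (a - b)).

Lemma approx (K : fieldType) (v : K -> int) (R M P : K -> Prop) (hi : int) :
  is_dval v -> is_subring R -> resid v R -> is_submod R M ->
  (forall a, a != 0 -> hi <= v a -> M a) ->
  (forall a b l, P a -> a != 0 -> M b -> b != 0 -> v b = v a -> R l -> P (a - l * b)) ->
  (forall a, P a -> a != 0 -> v a < hi -> vset v M (v a)) ->
  forall a, P a -> M a.
Proof.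
move=> hv hR hres hM hhi hP hvs.
suff H : forall n : nat, forall a, P a -> (a = 0 \/ hi - v a <= n%:Z) -> M a.
  move=> a Pa; case: (eqVneq a 0) => [->|a0]; first by case: hM.
  case: (lerP hi (v a)) => h; first exact: hhi.
  apply: (H `|hi - v a|%N) => //; right; lia.
elim=> [|n IH] a Pa.
  case=> [->|h]; first by case: hM.
  case: (eqVneq a 0) => [->|a0]; first by case: hM.
  by apply: hhi => //; lia.
case=> [->|h]; first by case: hM.
case: (eqVneq a 0) => [->|a0]; first by case: hM.
case: (lerP hi (v a)) => hh; first exact: hhi.
have [b [Mb b0 vb]] := hvs a Pa a0 hh.
have vq : valring v (a / b).
  by right; rewrite vM // ?invr_eq0 // vV // vb; lia.
have [l [Rl hl]] := hres _ vq.
have e1 : a - l * b = b * (a / b - l).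
  by rewrite mulrBr mulrCA mulfV // mulr1 mulrC.
have Pa' := hP a b l Pa a0 Mb b0 vb Rl.
have Ma' : M (a - l * b).
  apply: IH => //; rewrite e1.
  case: hl => [->|hl]; first by left; rewrite mulr0.
  case: (eqVneq (a / b - l) 0) => [->|q0]; first by left; rewrite mulr0.
  right; rewrite vM // vb; move: (v a) (v (a / b - l)) h hl => x y; lia.
have -> : a = (a - l * b) + l * b by rewrite subrK.
by case: hM => _ hadd hsc; apply: hadd => //; apply: hsc.
Qed.

Definition dec (P : Prop) : bool := if excluded_middle_informative P then true else false.

Lemma decT (P : Prop) : P -> dec P = true.
Proof. by rewrite /dec; case: excluded_middle_informative. Qed.
Lemma decF (P : Prop) : ~ P -> dec P = false.
Proof. by rewrite /dec; case: excluded_middle_informative. Qed.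
Lemma decE (P : Prop) : dec P -> P.
Proof. by rewrite /dec; case: excluded_middle_informative. Qed.

Definition cnt (P : int -> Prop) (lo : int) (n : nat) : nat :=
  (\sum_(0 <= i < n) dec (P (lo + i%:Z)%R))%N.

Lemma cnt0 P lo : cnt P lo 0 = 0%N.
Proof. by rewrite /cnt big_geq. Qed.

Lemma cntS P lo n : cnt P lo n.+1 = (dec (P lo) + cnt P (lo + 1)%R n)%N.
Proof.
rewrite /cnt big_nat_recl // addr0; congr (_ + _)%N.
by apply: eq_bigr => i _; congr (dec (P _)); lia.
Qed.

Lemma cntSr P lo n : cnt P lo n.+1 = (cnt P lo n + dec (P (lo + n%:Z)%R))%N.
Proof. by rewrite /cnt big_nat_recr. Qed.

Lemma cnt_ext P Q lo n : (forall z, lo <= z < lo + n%:Z -> (P z <-> Q z)) -> cnt P lo n = cnt Q lo n.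
Proof.
move=> h; rewrite /cnt; apply: eq_big_nat => i /andP[_ hi].
have hi' : lo <= lo + i%:Z < lo + n%:Z by lia.
have [h1 h2] := h _ hi'.
have [hp|hp] := classic (P (lo + i%:Z)).
  by rewrite !decT //; apply: h1.
by rewrite !decF // => /h2.
Qed.

Lemma cnt_le P Q lo n : (forall z, lo <= z < lo + n%:Z -> P z -> Q z) -> (cnt P lo n <= cnt Q lo n)%N.
Proof.
move=> h; rewrite /cnt big_seq_cond [X in (_ <= X)%N]big_seq_cond; apply: leq_sum => i.
rewrite mem_iota add0n andbT => /andP[_ hi].
have [hp|hp] := classic (P (lo + i%:Z)); last by rewrite decF.
rewrite !decT //; apply: h => //; move: hi; clear; lia.
Qed.

Lemma cnt_split P Q lo n : cnt P lo n = (cnt (fun z => P z /\ Q z) lo n + cnt (fun z => P z /\ ~ Q z) lo n)%N.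
Proof.
rewrite /cnt -big_split /=; apply: eq_bigr => i _.
have [hp|hp] := classic (P (lo + i%:Z)); last by rewrite !decF //; case.
have [hq|hq] := classic (Q (lo + i%:Z)).
  by rewrite decT // decT // decF //; case.
by rewrite decT // decF ?decT //; case.
Qed.

Lemma cnt_pos P lo n z : lo <= z < lo + n%:Z -> P z -> (0 < cnt P lo n)%N.
Proof.
elim: n => [|n IH] hz Pz; first by lia.
rewrite cntSr; have [e|ne] := eqVneq z (lo + n%:Z).
  by rewrite -e decT // addn1.
by rewrite ltn_addr // IH //; lia.
Qed.

Lemma cnt_lt P Q lo n z : (forall z, lo <= z < lo + n%:Z -> P z -> Q z) ->
  lo <= z < lo + n%:Z -> Q z -> ~ P z -> (cnt P lo n < cnt Q lo n)%N.
Proof.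
move=> h hz Qz Pz.
rewrite (cnt_split Q P) (@cnt_ext (fun z => Q z /\ P z) P).
  by rewrite -[X in (X < _)%N]addn0 ltn_add2l; apply: (cnt_pos hz).
by move=> w hw; split; [case | move=> Pw; split => //; apply: h].
Qed.

Lemma cnt_false P lo n : (forall z, lo <= z < lo + n%:Z -> ~ P z) -> cnt P lo n = 0%N.
Proof.
move=> h; rewrite /cnt big1_seq // => i; rewrite mem_iota add0n => /andP[_ hi].
rewrite decF //; apply: h; lia.
Qed.

Lemma cnt_eq_sub P Q lo n : (forall z, lo <= z < lo + n%:Z -> P z -> Q z) ->
  cnt P lo n = cnt Q lo n -> forall z, lo <= z < lo + n%:Z -> Q z -> P z.
Proof.
move=> h e z hz Qz; apply: NNPP => Pz.
by have := cnt_lt h hz Qz Pz; rewrite e ltnn.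
Qed.

Lemma cnt_one (a : int) lo n : (cnt (fun z => z = a) lo n <= 1)%N.
Proof.
elim: n lo => [|n IH] lo; first by rewrite cnt0.
rewrite cntS; have [e|ne] := eqVneq lo a.
  rewrite decT // cnt_false // => z hz; lia.
by rewrite decF ?add0n ?IH //; apply/eqP.
Qed.

Lemma cnt_addn P lo n m : cnt P lo (n + m) = (cnt P lo n + cnt P (lo + n%:Z)%R m)%N.
Proof.
rewrite /cnt (@big_cat_nat _ _ _ n 0 (n + m) _ _ (leq0n n) (leq_addr m n)) /=; congr (_ + _)%N.
rewrite -{1}[n]add0n big_addn addKn; apply: eq_bigr => i _.
by congr (dec (P _)); lia.
Qed.

Lemma sum_mul_split (F : nat -> nat) (Q E : nat) :
  (\sum_(0 <= i < Q * E) F i = \sum_(0 <= j < E) \sum_(0 <= n < Q) F (n * E + j))%N.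
Proof.
elim: Q => [|Q IH].
  rewrite mul0n big_geq // big1 // => j _; by rewrite big_geq.
rewrite mulSn (addnC E) (@big_cat_nat _ _ _ (Q * E) 0 (Q * E + E) _ _ (leq0n _) (leq_addr _ _)) /= IH.
rewrite -{1}[(Q * E)%N]add0n big_addn addKn.
rewrite -big_split /=; apply: eq_bigr => j _.
by rewrite big_nat_recr //= (addnC j).
Qed.

Lemma sum_unique (A : nat -> Prop) (Q n0 : nat) : (n0 < Q)%N -> A n0 ->
  (forall n, (n < Q)%N -> A n -> n = n0) -> (\sum_(0 <= n < Q) dec (A n) = 1)%N.
Proof.
move=> hq a0 hu.
rewrite (@big_cat_nat _ _ _ n0 0 Q _ _ (leq0n _) (ltnW hq)) /=.
rewrite [X in (_ + X)%N]big_ltn // decT // big1_seq; last first.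
  move=> i; rewrite mem_iota => /andP[_ /andP[h1 h2]]; rewrite decF // => Ai.
  have := hu i _ Ai; lia.
rewrite big1_seq // => i; rewrite mem_iota => /andP[_ /andP[h1 h2]]; rewrite decF // => Ai.
have := hu i _ Ai; lia.
Qed.

Lemma apery (W : int -> Prop) (c : int) (E Q : nat) :
  (0 < E)%N -> W 0 -> W E%:Z -> (forall a b, W a -> W b -> W (a + b)) ->
  (forall z, W z -> 0 <= z) -> (forall z, c <= z -> W z) -> W c ->
  c + E%:Z <= (Q * E)%N%:Z ->
  cnt (fun z => W z /\ ~ W (z - E%:Z)) 0 (Q * E) = E.
Proof.
move=> E0 W0 WE Wadd Wpos Wc Wcc hQ.
have WkE : forall k : nat, W (k%:Z * E%:Z).
  elim=> [|k IH]; first by rewrite mul0r.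
  have -> : (k.+1)%:Z * E%:Z = k%:Z * E%:Z + E%:Z by lia.
  exact: Wadd.
have c0 := Wpos _ Wcc.
rewrite /cnt sum_mul_split.
transitivity (\sum_(0 <= j < E) 1)%N; last by rewrite sum_nat_const_nat subn0 muln1.
apply: eq_big_nat => j /andP[_ hj].
pose B n := dec (W (j%:Z + n%:Z * E%:Z)).
have exB : exists n, B n.
  exists `|c|%N; rewrite /B decT //; apply: Wc; nia.
have [m Bm minm] := ex_minnP exB.
have Wm : W (j%:Z + m%:Z * E%:Z) by apply: decE.
have nWm : ~ W (j%:Z + m%:Z * E%:Z - E%:Z).
  case: m Bm minm Wm => [|m] Bm minm Wm.
    move/Wpos; lia.
  move=> Wm'; have := minm m; rewrite /B decT; last first.
    by have -> : j%:Z + m%:Z * E%:Z = j%:Z + m.+1%:Z * E%:Z - E%:Z by lia.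
  by move/(_ isT); rewrite ltnn.
have mQ : (m < Q)%N.
  have : j%:Z + m%:Z * E%:Z < c + E%:Z.
    rewrite ltNge; apply/negP => hge; apply: nWm; apply: Wc; lia.
  nia.
apply: (@sum_unique (fun n => W (0 + (n * E + j)%N%:Z) /\ ~ W (0 + (n * E + j)%N%:Z - E%:Z)) Q m mQ).
  by split; rewrite add0r; have -> : (m * E + j)%N%:Z = j%:Z + m%:Z * E%:Z by lia.
move=> n nQ; rewrite add0r; have -> : (n * E + j)%N%:Z = j%:Z + n%:Z * E%:Z by lia.
case=> Wn nWn.
have mn : (m <= n)%N by apply: minm; rewrite /B decT.
case: (ltnP m n) => [lt|ge]; last by apply/eqP; rewrite eqn_leq mn ge.
exfalso; apply: nWn.
have -> : j%:Z + n%:Z * E%:Z - E%:Z = (j%:Z + m%:Z * E%:Z) + (n - m - 1)%N%:Z * E%:Z by nia.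
exact: Wadd.
Qed.

Lemma vset_ext (K : fieldType) (v : K -> int) (M M' : K -> Prop) z :
  (forall a, M a <-> M' a) -> (vset v M z <-> vset v M' z).
Proof.
move=> h; split; case=> a [Ma a0 va]; exists a; split => //; by apply/h.
Qed.

Lemma chain_mono (K : fieldType) (R J I : K -> Prop) n f :
  is_chain R J I n f -> forall i j, (i <= j <= n)%N -> forall a, f i a -> f j a.
Proof.
case=> _ _ _ hs i j /andP[]; elim: j => [|j IH].
  by rewrite leqn0 => /eqP -> _.
rewrite leq_eqVlt => /orP[/eqP -> //|]; rewrite ltnS => ij jn a fa.
have [h _] := hs j jn; apply: h; apply: IH => //; exact: ltnW.
Qed.

Lemma chain_end (K : fieldType) (R J A B : K -> Prop) n f :
  is_chain R J A n f -> (forall a, A a <-> B a) -> is_chain R J B n f.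
Proof.
case=> h0 hn hsub hs hAB; split => // a; split => [/hn /hAB //| /hAB /hn //].
Qed.

Lemma chain_ext (K : fieldType) (R J A B : K -> Prop) n f :
  is_chain R J A n f -> (forall a, A a -> B a) -> (exists a, B a /\ ~ A a) -> is_submod R B ->
  is_chain R J B n.+1 (fun i => if (i <= n)%N then f i else B).
Proof.
case=> h0 hn hsub hs hAB [w [Bw Aw]] hB; split.
- by move=> a /=; apply: h0.
- by move=> a /=; rewrite ltnn.
- move=> i; rewrite leq_eqVlt => /orP[/eqP ->|]; first by rewrite ltnn.
  by rewrite ltnS => hi; rewrite hi; apply: hsub.
- move=> i; rewrite ltnS leq_eqVlt => /orP[/eqP ->|hi].
    rewrite eqxx ltnn /=; split; first by move=> a /hn; apply: hAB.
    by exists w; split => // /hn.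
  by rewrite hi orbT; apply: hs.
Qed.

Lemma chain_bound (K : fieldType) (v : K -> int) (R I J : K -> Prop) (lo : int) (N : nat) n f :
  is_dval v -> is_subring R -> resid v R ->
  (forall a, I a -> a != 0 -> lo <= v a) -> (forall a, a != 0 -> lo + N%:Z <= v a -> J a) ->
  is_chain R J I n f -> (n <= cnt (fun z => vset v I z /\ ~ vset v J z) lo N)%N.
Proof.
move=> hv hR hres hlo hhi hc.
have hmono := chain_mono hc.
case: hc => h0 hn hsub hs.
pose phi i := cnt (vset v (f i)) lo N.
have step : forall i, (i < n)%N -> (phi i < phi i.+1)%N.
  move=> i ilt.
  have fsub : forall a, f i a -> f i.+1 a by case: (hs i ilt).
  have sub : forall z, lo <= z < lo + N%:Z -> vset v (f i) z -> vset v (f i.+1) z.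
    by move=> z _ [a [fa a0 va]]; exists a; split => //; apply: fsub.
  have [[z [hz [Fz nFz]]]|nex] := classic (exists z, lo <= z < lo + N%:Z /\ vset v (f i.+1) z /\ ~ vset v (f i) z).
    exact: (cnt_lt sub hz Fz nFz).
  exfalso; have [_ [w [fw nfw]]] := hs i ilt; apply: nfw.
  have hMi := hsub i (ltnW ilt).
  have hMi1 := hsub i.+1 ilt.
  apply: (approx hv hR hres hMi (hi := lo + N%:Z)) fw.
  - move=> a a0 ha; apply: (hmono 0%N) => //; first by rewrite leq0n /= ltnW.
    by apply/h0; apply: hhi.
  - move=> a b l fa _ fb _ _ Rl; exact: (Msub hR hMi1 fa (fsub _ fb) Rl).
  - move=> a fa a0 va; apply: NNPP => nv; apply: nex; exists (v a); split; last split => //.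
      have : I a by apply/hn; apply: (hmono i.+1) => //; rewrite ilt leqnn.
      move/hlo => /(_ a0); lia.
    by exists a.
have grow : forall i, (i <= n)%N -> (phi 0%N + i <= phi i)%N.
  elim=> [|i IH] hi; first by rewrite addn0.
  have := step i hi; have := IH (ltnW hi); lia.
have := grow n (leqnn n).
have -> : phi n = cnt (vset v I) lo N by apply: cnt_ext => z _; apply: vset_ext => a; apply: hn.
have -> : phi 0%N = cnt (vset v J) lo N by apply: cnt_ext => z _; apply: vset_ext => a; apply: h0.
rewrite (cnt_split (vset v I) (vset v J)).
have -> : cnt (fun z => vset v I z /\ vset v J z) lo N = cnt (vset v J) lo N.
  apply: cnt_ext => z _; split; first by case.
  case=> a [Ja a0 va]; split; last by exists a.
  exists a; split => //; apply/hn; apply: (hmono 0%N); first by rewrite leq0n leqnn.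
  by apply/h0.
lia.
Qed.

Definition Ms (K : fieldType) (v : K -> int) (I J : K -> Prop) (s : int) : K -> Prop :=
  fun a => exists j b, [/\ J j, I b, (b = 0 \/ s <= v b) & a = j + b].

Lemma Ms_submod (K : fieldType) (v : K -> int) (R I J : K -> Prop) s :
  is_dval v -> is_subring R -> (forall a, R a -> valring v a) ->
  is_submod R I -> is_submod R J -> is_submod R (Ms v I J s).
Proof.
move=> hv hR hRv [I0 Iadd Isc] [J0 Jadd Jsc]; split.
- by exists 0, 0; split => //; [left | rewrite addr0].
- move=> a1 a2 [j1 [b1 [Jj1 Ib1 hb1 ->]]] [j2 [b2 [Jj2 Ib2 hb2 ->]]].
  exists (j1 + j2), (b1 + b2); split; [exact: Jadd | exact: Iadd | | by rewrite addrACA].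
  case: (eqVneq (b1 + b2) 0) => [->|nz]; [by left | right; exact: vDge].
- move=> r a Rr [j [b [Jj Ib hb ->]]]; exists (r * j), (r * b); split; [exact: Jsc | exact: Isc | | by rewrite mulrDr].
  case: (eqVneq r 0) => [->|r0]; first by left; rewrite mul0r.
  case: (eqVneq b 0) => [->|b0]; first by left; rewrite mulr0.
  right; rewrite vM //; case: hb => [/eqP|hb]; first by rewrite (negbTE b0).
  case: (hRv r Rr) => [/eqP|hr]; first by rewrite (negbTE r0).
  move: hr hb; move: (v r) (v b) => x y; lia.
Qed.

Lemma chain_build (K : fieldType) (v : K -> int) (R I J : K -> Prop) (lo : int) (N : nat) :
  is_dval v -> is_subring R -> resid v R -> (forall a, R a -> valring v a) ->
  is_submod R I -> is_submod R J -> (forall a, J a -> I a) ->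
  (forall a, I a -> a != 0 -> lo <= v a) -> (forall a, a != 0 -> lo + N%:Z <= v a -> J a) ->
  exists f, is_chain R J I (cnt (fun z => vset v I z /\ ~ vset v J z) lo N) f.
Proof.
move=> hv hR hres hRv hI hJ hJI hlo hhi.
have hMs := fun s => Ms_submod s hv hR hRv hI hJ.
have [I0 Iadd Isc] := hI; have [J0 Jadd Jsc] := hJ.
suff H : forall m, (m <= N)%N -> exists f, is_chain R J (Ms v I J (lo + N%:Z - m%:Z))
    (cnt (fun z => vset v I z /\ ~ vset v J z) (lo + N%:Z - m%:Z) m) f.
  have [f hf] := H N (leqnn N); exists f.
  have -> : lo = lo + N%:Z - N%:Z by rewrite addrK.
  apply: (chain_end hf) => a; split.
    by case=> [j [b [Jj Ib _ ->]]]; apply: Iadd => //; apply: hJI.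
  move=> Ia; exists 0, a; split => //; last by rewrite add0r.
  rewrite addrK; case: (eqVneq a 0) => [->|a0]; [by left | right; exact: hlo].
elim=> [|m IH] hm.
  exists (fun _ => J); rewrite cnt0; split => //.
  - move=> a; rewrite subr0; split.
      by move=> Ja; exists a, 0; split => //; [left | rewrite addr0].
    case=> [j [b [Jj Ib hb ->]]]; apply: Jadd => //.
    case: (eqVneq b 0) => [->|b0] //; case: hb => [/eqP|hb]; first by rewrite (negbTE b0).
    exact: hhi.
have [f hf] := IH (ltnW hm).
have es : lo + N%:Z - m.+1%:Z = (lo + N%:Z - m%:Z) - 1 by lia.
move: hf; move: (lo + N%:Z - m%:Z) es => s es hf.
rewrite es cntS.
have -> : s - 1 + 1 = s by rewrite subrK.
have sub : forall a, Ms v I J s a -> Ms v I J (s - 1) a.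
  move=> a; case=> j [b [Jj Ib hb ->]]; exists j, b; split => //.
  case: hb => [->|hb]; [by left | right; lia].
have [[vI nvJ]|nP] := classic (vset v I (s - 1) /\ ~ vset v J (s - 1)).
  rewrite decT; last by split.
  rewrite add1n.
  exists (fun i => if (i <= cnt (fun z => vset v I z /\ ~ vset v J z) s m)%N then f i else Ms v I J (s - 1)).
  apply: (chain_ext hf sub); last exact: hMs.
  case: vI => b [Ib b0 vb]; exists b; split.
    by exists 0, b; split => //; [right; lia | rewrite add0r].
  case=> j [b' [Jj Ib' hb' eb]]; apply: nvJ.
  have ej : j = b + - b' by rewrite eb addrK.
  case: hb' => [b'0|hb'].
    by exists j; split => //; [rewrite ej b'0 oppr0 addr0 | rewrite ej b'0 oppr0 addr0].
  have [j0 vj] : b + - b' != 0 /\ v (b + - b') = v b.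
    apply: vDlt => //; right; rewrite vN //; lia.
  by exists j; split => //; rewrite ej; [| rewrite vj].
rewrite decF // add0n; exists f; apply: (chain_end hf) => a; split; first exact: sub.
case=> j [b [Jj Ib hb ->]].
case: (eqVneq b 0) => [b0|b0].
  by exists j, b; split => //; left.
case: hb => [/eqP|hb]; first by rewrite (negbTE b0).
have [hb1|hb1] := lerP s (v b).
  by exists j, b; split => //; right.
have vbs : v b = s - 1 by lia.
have vJ : vset v J (s - 1).
  apply: NNPP => nvJ; apply: nP; split => //; by exists b.
case: vJ => j' [Jj' j'0 vj'].
have vq : valring v (b / j') by right; rewrite vM ?invr_eq0 // vV // vj' vbs; lia.
have [l [Rl hl]] := hres _ vq.
exists (j + l * j'), (b - l * j'); split.
- by apply: Jadd => //; apply: Jsc.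
- by apply: (Msub hR hI Ib (hJI _ Jj') Rl).
- have e1 : b - l * j' = j' * (b / j' - l) by rewrite mulrBr mulrCA mulfV // mulr1 mulrC.
  rewrite e1; case: hl => [->|hl]; first by left; rewrite mulr0.
  case: (eqVneq (b / j' - l) 0) => [->|q0]; first by left; rewrite mulr0.
  right; rewrite vM // vj'; move: (v (b / j' - l)) hl => x; lia.
- by rewrite addrACA subrr addr0.
Qed.

Lemma length_eq (K : fieldType) (v : K -> int) (R I J : K -> Prop) (lo : int) (N n : nat) :
  is_dval v -> is_subring R -> resid v R -> (forall a, R a -> valring v a) ->
  is_submod R I -> is_submod R J -> (forall a, J a -> I a) ->
  (forall a, I a -> a != 0 -> lo <= v a) -> (forall a, a != 0 -> lo + N%:Z <= v a -> J a) ->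
  module_length R I J n -> n = cnt (fun z => vset v I z /\ ~ vset v J z) lo N.
Proof.
move=> hv hR hres hRv hI hJ hJI hlo hhi [[f hf] hmax].
apply/eqP; rewrite eqn_leq; apply/andP; split.
  exact: (chain_bound hv hR hres hlo hhi hf).
have [g hg] := chain_build hv hR hres hRv hI hJ hJI hlo hhi.
exact: hmax hg.
Qed.

Lemma cnt_widen P lo n n' : (n <= n')%N ->
  (forall z, lo + n%:Z <= z < lo + n'%:Z -> ~ P z) -> cnt P lo n' = cnt P lo n.
Proof.
move=> hn h; rewrite -(subnKC hn) cnt_addn [X in (_ + X)%N]cnt_false ?addn0 // => z hz; apply: h.
move: hz; rewrite -(subnKC hn); lia.
Qed.

Lemma cnt_shift P lo d n : cnt (fun z => P (z - d)) lo n = cnt P (lo - d) n.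
Proof. by rewrite /cnt; apply: eq_bigr => i _; congr (dec (P _)); lia. Qed.

Lemma cnt_exists P lo n : (0 < cnt P lo n)%N -> exists z, lo <= z < lo + n%:Z /\ P z.
Proof.
move=> h; apply: NNPP => ne; move: h; rewrite cnt_false // => z hz Pz; apply: ne; by exists z.
Qed.

Lemma cnt_nonzero P lo n : (2 <= cnt P lo n)%N -> exists z, lo <= z < lo + n%:Z /\ P z /\ z <> 0.
Proof.
move=> h2.
have h1 := cnt_split P (fun z => z = 0) lo n.
have h3 := cnt_one 0 lo n.
have h4 := @cnt_le (fun z => P z /\ z = 0) (fun z => z = 0) lo n (fun z _ => @proj2 _ _).
have : (0 < cnt (fun z => P z /\ z <> 0) lo n)%N.
  move: h1 h3 h4; move: (cnt P lo n) (cnt (fun z => P z /\ z = 0) lo n)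
     (cnt (fun z => P z /\ z <> 0) lo n) (cnt (fun z => z = 0) lo n) h2 => a b c d; lia.
by move/cnt_exists => [z [hz [Pz z0]]]; exists z.
Qed.

Lemma vset_mono (K : fieldType) (v : K -> int) (M M' : K -> Prop) z :
  (forall a, M a -> M' a) -> vset v M z -> vset v M' z.
Proof. by move=> h [a [Ma a0 va]]; exists a; split => //; apply: h. Qed.

Lemma Rval (K : fieldType) (v : K -> int) (R : K -> Prop) a :
  (forall a, R a -> valring v a) -> R a -> a != 0 -> 0 <= v a.
Proof. by move=> h /h [/eqP|//]; move=> e /negP. Qed.

Lemma denom (K : fieldType) (R : K -> Prop) (s : seq K) : is_subring R ->
  (forall z, exists a b, [/\ R a, R b, b != 0 & z = a / b]) ->
  exists d, [/\ R d, d != 0 & forall g, g \in s -> R (d * g)].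
Proof.
move=> hR hfrac; elim: s => [|g s [d [Rd d0 hd]]].
  by exists 1; split => //; [exact: R1 | exact: oner_neq0].
have [a [b [Ra Rb b0 ->]]] := hfrac g.
exists (d * b); split; [exact: RM | by rewrite mulf_neq0 |].
move=> g'; rewrite inE => /orP[/eqP ->|hg].
  by rewrite -mulrA (mulrCA b) mulfV // mulr1; exact: RM.
by rewrite mulrAC; apply: RM => //; apply: hd.
Qed.

Lemma vexp (K : fieldType) (v : K -> int) t (j : nat) : is_dval v -> t != 0 -> v t = 1 ->
  v (t ^+ j) = j%:Z.
Proof.
move=> hv t0 vt; elim: j => [|j IH]; first by rewrite expr0 v1.
rewrite exprS vM // ?expf_neq0 // IH vt; lia.
Qed.

Lemma arith1 (e c p Y Y' L L' : int) : 0 < e -> c - e <= p * e -> p * e < c ->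
  c <= Y + (L + 1) * e -> c <= Y' + (L' + 1) * e -> Y + Y' < c + e ->
  p <= L + L' + 2 /\ (p = L + L' + 2 -> 0 < (p + 1) * e - c).
Proof.
move=> e0 h1 h2 h3 h4 h5.
have h6 : c < (L + L' + 3) * e by nia.
have h7 : p * e < (L + L' + 3) * e by lia.
have h8 : p < L + L' + 3.
  by move: h7; rewrite ltr_pM2r.
split; first by lia.
move=> hp; rewrite hp; nia.
Qed.

Lemma arith2 (e c p Y : int) : 0 < e -> 3 <= p -> p * e < c -> c <= Y + (0 + 1) * e -> c + e < 2 * Y.
Proof. move=> *; nia. Qed.

Unset Implicit Arguments.

Theorem proposition1p11 (K : fieldType) (v : K -> int) (R : K -> Prop)
    (c e p : int) (r k : nat) (x : K) (y l : nat -> int) :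
  setting v R ->
  (* c: least element of v(R) with c + N ⊆ v(R) *)
  vset v R c -> (forall n, c <= n -> vset v R n) ->
  (forall c', vset v R c' -> (forall n, c' <= n -> vset v R n) -> c <= c') ->
  (* e: least positive element of v(R) *)
  vset v R e -> 0 < e -> (forall z, vset v R z -> 0 < z -> e <= z) ->
  (* x in m with v(x) = e *)
  maxid v R x -> x != 0 -> v x = e ->
  (* r = l_R((R :_K m)/R) *)
  module_length R (colon R (maxid v R)) R r ->
  (* k = l_R(R/(C + xR)) *)
  module_length R R (sumset (conductor v R) (principal R x)) k ->
  (1 < k)%N ->
  c - e <= p * e -> p * e < c ->
  (forall i j, (1 <= i)%N -> (i < j)%N -> (j <= k.-1)%N -> y i < y j) ->
  (forall z, (vset v R z /\ ~ vset v (sumset (conductor v R) (principal R x)) z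
              /\ z != 0) <-> exists2 i, (1 <= i <= k.-1)%N & z = y i) ->
  (forall i, (1 <= i <= k.-1)%N ->
     [/\ 0 <= l i, y i + l i * e < c & c <= y i + (l i + 1) * e]) ->
  [/\ (r%:Z = e - k%:Z <->
        (forall z, (vset v R z /\ ~ vset v (colon (principal R x) (maxid v R)) z)
                   <-> (z = 0 \/ exists2 i, (1 <= i <= k.-1)%N & z = y i))),
      (r%:Z < e - 1 ->
        [/\ 2 * y 1%N < c + e, p <= 2 * l 1%N + 2 &
            (p = 2 * l 1%N + 2 -> 0 < (p + 1) * e - c)]),
      (r%:Z = e - k%:Z ->
        [/\ (forall j, (1 <= j <= k.-1)%N -> y 1%N + y j < c + e),
            p <= l 1%N + l k.-1 + 2 &
            (p = l 1%N + l k.-1 + 2 -> 0 < (p + 1) * e - c)]) &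
      (3 <= p -> forall i, (1 <= i <= k.-1)%N -> l i = 0 -> c + e < 2 * y i)].
Proof.
move=> [hv hR hRv hfrac [hfg hnotall hres]] Wc Wge cmin We e0 emin mx x0 vx hr hk k1 hp1 hp2 ymono hy hl.
have hres' : resid v R := hres.
pose W := vset v R.
have Wpos : forall z, W z -> 0 <= z.
  by move=> z [a [Ra a0 <-]]; exact: Rval hRv Ra a0.
have W0 : W 0 by exists 1; split; [exact: R1 | exact: oner_neq0 | exact: v1].
have Wadd : forall a b, W a -> W b -> W (a + b).
  move=> _ _ [a [Ra a0 <-]] [b [Rb b0 <-]]; exists (a * b); split; [exact: RM | by rewrite mulf_neq0 | exact: vM].
have hRsub : is_submod R R.
  split; [exact: R0 | move=> a b; exact: RD | move=> a b; exact: RM].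
have [d [Rd d0 hd]] : exists d, [/\ R d, d != 0 & forall a, a != 0 -> v d <= v a -> R a].
  case: hfg => s [hs hgen].
  have [d [Rd d0 hds]] := denom s hR hfrac.
  exists d; split => // a a0 hva.
  have vq : valring v (a / d) by right; rewrite vM ?invr_eq0 // vV //; lia.
  have [f [Rf ha']] := hgen _ vq.
  have -> : a = d * (a / d) by rewrite mulrCA mulfV // mulr1.
  rewrite ha'.
  rewrite mulr_sumr; apply: big_ind; [exact: R0 | move=> u w; exact: RD |].
  move=> i _; rewrite mulrCA; apply: RM => //; apply: hds; exact: mem_nth.
have Cfull : forall a, a != 0 -> c <= v a -> R a.
  move=> a a0 ha.
  apply: (approx hv hR hres' hRsub (hi := v d) (P := fun a => a = 0 \/ c <= v a)) (or_intror ha).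
  - move=> w w0 hw; exact: hd.
  - move=> w b l' hw w0 Rb b0 vb Rl.
    case: (eqVneq (w - l' * b) 0) => [->|nz]; first by left.
    right; apply: (vDge hv nz hw).
    case: (eqVneq l' 0) => [->|l0]; first by left; rewrite mul0r oppr0.
    right; rewrite vN // vM // vb; have := Rval hRv Rl l0.
    case: hw => [hw|hw]; first by move: w0; rewrite hw eqxx.
    move: (v l') (v w) hw => u z; lia.
  - move=> w [->|hw] w0 _; first by move: w0; rewrite eqxx.
    exact: Wge.
have c0 : 0 <= c by exact: Wpos.
have [t [t0 vt]] : exists t, t != 0 /\ v t = 1 by case: hv.
have Cval : forall a, conductor v R a -> a != 0 -> c <= v a.
  move=> a Ca a0; apply: cmin.
    by exists a; split => //; rewrite -[a]mulr1; apply: Ca; right; rewrite v1.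
  move=> n hn; exists (a * t ^+ `|n - v a|%N); split.
  - apply: Ca; case: (eqVneq (t ^+ `|n - v a|%N) 0) => [->|tn0]; [by left | right].
    by rewrite vexp //.
  - by rewrite mulf_neq0 // expf_neq0.
  - rewrite vM ?expf_neq0 // vexp //; move: (v a) hn => u; lia.
have Chigh : forall a, a != 0 -> c <= v a -> conductor v R a.
  move=> a a0 ha b [->|hb]; first by rewrite mulr0; exact: R0.
  case: (eqVneq b 0) => [->|b0]; first by rewrite mulr0; exact: R0.
  apply: Cfull; first by rewrite mulf_neq0.
  rewrite vM //; move: (v a) (v b) ha hb => u w; lia.
have cpos : 0 < c.
  rewrite lt0r; apply/andP; split => //; apply/eqP => ec.
  case: hnotall => a [va nRa]; apply: nRa.
  case: va => [->|va]; first exact: R0.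
  case: (eqVneq a 0) => [->|a0]; first exact: R0.
  by apply: Cfull => //; rewrite ec.
have mval : forall s, maxid v R s -> s != 0 -> e <= v s.
  move=> s [Rs hs] s0; case: hs => [hs|hs]; first by rewrite hs eqxx in s0.
  by apply: emin => //; exists s.
have Rx : R x by case: mx.
pose Rm := colon R (maxid v R).
pose V := vset v Rm.
have hRm : is_submod R Rm.
  split.
  - by move=> b _; rewrite mul0r; exact: R0.
  - by move=> a b ha hb w mw; rewrite mulrDl; apply: RD => //; [apply: ha | apply: hb].
  - by move=> u a Ru ha w mw; rewrite -mulrA; apply: RM => //; apply: ha.
have RRm : forall a, R a -> Rm a.
  by move=> a Ra w [Rw _]; exact: RM.
have Rmx : forall a, Rm a -> R (a * x) by move=> a ha; exact: ha.
have Rmlo : forall a, Rm a -> a != 0 -> - e <= v a.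
  move=> a ha a0; have := Rval hRv (Rmx a ha) (mulf_neq0 a0 x0).
  rewrite vM // vx; move: (v a) => u; lia.
have Ec : -e + (absz (c + e))%:Z = c by lia.
have hr' : r = cnt (fun z => V z /\ ~ W z) (- e) (absz (c + e)).
  apply: (length_eq hv hR hres' hRv hRm hRsub RRm Rmlo) => // a a0.
  by rewrite Ec => ha; exact: Cfull.
pose J2 := sumset (conductor v R) (principal R x).
have hC : is_submod R (conductor v R).
  split.
  - by move=> b _; rewrite mul0r; exact: R0.
  - by move=> a b ha hb w mw; rewrite mulrDl; apply: RD => //; [apply: ha | apply: hb].
  - by move=> u a Ru ha w mw; rewrite -mulrA; apply: RM => //; apply: ha.
have hPx : is_submod R (principal R x).
  split.
  - by exists 0; split; [exact: R0 | rewrite mulr0].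
  - by move=> _ _ [a [Ra ->]] [b [Rb ->]]; exists (a + b); split; [exact: RD | rewrite mulrDr].
  - by move=> u _ Ru [a [Ra ->]]; exists (u * a); split; [exact: RM | rewrite mulrCA].
have hJ2 : is_submod R J2.
  case: hC => C0 Cadd Csc; case: hPx => P0 Padd Psc; split.
  - by exists 0, 0; split => //; rewrite addr0.
  - move=> _ _ [a1 [b1 [h1 h1' ->]]] [a2 [b2 [h2 h2' ->]]].
    by exists (a1 + a2), (b1 + b2); split; [exact: Cadd | exact: Padd | rewrite addrACA].
  - move=> u _ Ru [a1 [b1 [h1 h1' ->]]].
    by exists (u * a1), (u * b1); split; [exact: Csc | exact: Psc | rewrite mulrDr].
have J2R : forall a, J2 a -> R a.
  move=> _ [a [b [Ca [b' [Rb' ->]] ->]]]; apply: RD => //; last exact: RM.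
  by rewrite -[a]mulr1; apply: Ca; right; rewrite v1.
have Rlo : forall a, R a -> a != 0 -> 0 <= v a by move=> a; exact: Rval.
have hk' : k = cnt (fun z => W z /\ ~ vset v J2 z) 0 (absz c).
  apply: (length_eq hv hR hres' hRv hRsub hJ2 J2R Rlo) => // a a0 ha.
  exists a, 0; split; [apply: Chigh => //; move: ha; lia | | by rewrite addr0].
  by exists 0; split; [exact: R0 | rewrite mulr0].
pose xRm := colon (principal R x) (maxid v R).
have vxRm : forall z, vset v xRm z <-> V (z - e).
  move=> z; split.
    case=> a [ha a0 <-]; exists (a / x); split.
    - move=> w mw; have [u [Ru eu]] := ha w mw.
      by rewrite mulrAC eu mulrAC mulfV // mul1r.
    - by rewrite mulf_neq0 // invr_eq0.
    - by rewrite vM ?invr_eq0 // vV // vx.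
  case=> b [hb b0 vb]; exists (x * b); split.
  - by move=> w mw; exists (b * w); split; [exact: hb | rewrite mulrA].
  - by rewrite mulf_neq0.
  - by rewrite vM // vb vx; lia.
have J2xRm : forall a, J2 a -> xRm a.
  move=> _ [a [b [Ca [b' [Rb' ->]] ->]]] w mw.
  exists (a * (w / x) + b' * w); split.
    apply: RD => //; last by apply: RM => //; case: mw.
    apply: Ca; case: (eqVneq w 0) => [->|w0]; first by left; rewrite mul0r.
    right; rewrite vM ?invr_eq0 // vV // vx; have := mval w mw w0; lia.
  by field.
have yprop : forall i, (1 <= i <= k.-1)%N -> [/\ W (y i), 0 < y i & y i < c].
  move=> i hi; have [Wy [_ ny0]] : W (y i) /\ ~ vset v J2 (y i) /\ y i != 0 by apply/hy; exists i.
  have [l0 hl1 _] := hl i hi; split => //.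
    by have := Wpos _ Wy; move: ny0; move: (y i) => u; lia.
  move: hl1 l0 e0; move: (l i) => u; nia.
have ymono1 : forall i, (1 <= i <= k.-1)%N -> y 1%N <= y i.
  move=> i /andP[i1 ik]; case: (ltnP 1 i) => h.
    by apply: ltW; apply: ymono.
  by have -> : i = 1%N by apply/eqP; rewrite eqn_leq h i1.
have Ymin : forall z, W z -> 0 < z -> z < c -> ~ W (z - e) -> y 1%N <= z.
  move=> z Wz z0 zc nW.
  have nJ : ~ vset v J2 z.
    case=> _ [[a [b [Ca [b' [Rb' ->]] ->]]] nz vz].
    apply: nW; case: (eqVneq b' 0) => [b0|b0].
      by move: vz; rewrite b0 mulr0 addr0 => vz; have := Cval a Ca; move: nz; rewrite b0 mulr0 addr0 => nz; move/(_ nz); lia.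
    exists b'; split => //.
    case: (eqVneq a 0) => [a0|a0].
      by move: vz; rewrite a0 add0r vM // vx => <-; lia.
    have va := Cval a Ca a0.
    have hlt : v (a + x * b') < v (- a) by rewrite vN // vz; lia.
    have [_ hv2] := vDlt hv nz (or_intror hlt).
    have : v (a + x * b' + - a) = z by rewrite hv2 vz.
    by rewrite addrC addKr vM // vx => <-; lia.
  have [i hi ->] : exists2 i, (1 <= i <= k.-1)%N & z = y i.
    by apply/hy; split => //; split => //; rewrite gt_eqF.
  exact: ymono1.
have y1c : y 1%N < c by have [] := yprop 1%N (ltac:(rewrite leqnn; lia)).
have Dlem : forall s, maxid v R s -> exists u, R u /\ (s - x * u = 0 \/ y 1%N <= v (s - x * u)).
  suff H : forall n : nat, forall s, maxid v R s -> (s = 0 \/ y 1%N - v s <= n%:Z) ->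
      exists u, R u /\ (s - x * u = 0 \/ y 1%N <= v (s - x * u)).
    move=> s ms; case: (eqVneq s 0) => [->|s0].
      by exists 0; split; [exact: R0 | left; rewrite mulr0 subr0].
    apply: (H (absz (y 1%N - v s))) => //; right; lia.
  elim=> [|n IH] s ms hs.
    exists 0; split; first exact: R0.
    rewrite mulr0 subr0; case: hs => [->|hs]; [by left | right; lia].
  case: (eqVneq s 0) => [->|s0].
    by exists 0; split; [exact: R0 | left; rewrite mulr0 subr0].
  case: (lerP (y 1%N) (v s)) => hys.
    by exists 0; split; [exact: R0 | right; rewrite mulr0 subr0].
  have [Rs _] := ms.
  have es := mval s ms s0.
  have Wsm : W (v s - e).
    apply: NNPP => nW; have := Ymin (v s) (ltac:(by exists s)) (ltac:(lia)) (ltac:(lia)) nW; lia.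
  case: Wsm => b [Rb b0 vb].
  have xb0 : x * b != 0 by rewrite mulf_neq0.
  have vq : valring v (s / (x * b)).
    by right; rewrite vM ?invr_eq0 // vV // vM // vx vb; lia.
  have [lam [Rl hlam]] := hres _ vq.
  pose s' := s - x * (b * lam).
  have es' : s' = x * b * (s / (x * b) - lam).
    by rewrite /s'; field; rewrite b0 x0.
  have ms' : maxid v R s'.
    split; first by apply: RB => //; apply: RM => //; exact: RM.
    rewrite es'; case: hlam => [->|hl']; first by left; rewrite mulr0.
    case: (eqVneq (s / (x * b) - lam) 0) => [->|q0]; first by left; rewrite mulr0.
    right; rewrite vM // vM // vx vb; move: (v (s / (x * b) - lam)) hl' => w; lia.
  have hs' : s' = 0 \/ y 1%N - v s' <= n%:Z.
    rewrite es'; case: hlam => [->|hl']; first by left; rewrite mulr0.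
    case: (eqVneq (s / (x * b) - lam) 0) => [->|q0]; first by left; rewrite mulr0.
    right; rewrite vM // vM // vx vb; case: hs => [/eqP|hs]; first by rewrite (negbTE s0).
    move: (v (s / (x * b) - lam)) hl' => w; lia.
  have [u [Ru hu]] := IH s' ms' hs'.
  exists (b * lam + u); split; first by apply: RD => //; exact: RM.
  by move: hu; rewrite /s' mulrDr opprD addrA.
have Blem : forall z, W z -> c + e <= z + y 1%N -> vset v xRm z.
  move=> z [a [Ra a0 va]] hz; exists a; split => // w mw.
  have [u [Ru hu]] := Dlem w mw.
  exists (a * u + a * (w - x * u) / x); split.
    apply: RD => //; first exact: RM.
    case: (eqVneq (w - x * u) 0) => [->|nz]; first by rewrite mulr0 mul0r; exact: R0.
    case: hu => [/eqP|hu]; first by rewrite (negbTE nz).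
    apply: Cfull; first by rewrite !mulf_neq0 // invr_eq0.
    rewrite vM ?mulf_neq0 ?invr_eq0 // vM // vV // vx va; move: (v (w - x * u)) hu => q; lia.
  by field.
pose E := absz e.
have eE : e = E%:Z by rewrite /E; lia.
pose QE := ((absz c).+1 * E)%N.
have hQE : c + E%:Z <= QE%:Z by rewrite /QE; nia.
have hap := apery (W := W) (c := c) (E := E) (Q := (absz c).+1) (ltac:(lia)) W0 (ltac:(by rewrite -eE)) Wadd Wpos Wge Wc hQE.
pose S z := W z /\ ~ vset v xRm z.
pose T z := z = 0 \/ exists2 i, (1 <= i <= k.-1)%N & z = y i.
have WV : forall z, V (z - e) -> W z.
  move=> z [b [hb b0 vb]]; exists (b * x); split; [exact: Rmx | by rewrite mulf_neq0 | by rewrite vM // vb vx; lia].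
have cntS : (cnt S 0 QE + r = E)%N.
  rewrite -[in RHS]hap -eE -/QE (cnt_split (fun z => W z /\ ~ W (z - e)) (fun z => V (z - e))) addnC; congr (_ + _)%N; last first.
    apply: cnt_ext => z _; split.
      case=> Wz nx; have nV : ~ V (z - e) by move=> hV; apply: nx; apply/vxRm.
      split => //; split => // hW; apply: nV; case: hW => a [Ra a0 va]; exists a; split => //; exact: RRm.
    by case=> -[Wz _] nV; split => // /vxRm.
  rewrite hr' -(@cnt_widen _ _ _ QE); last 2 first.
  - rewrite /QE; nia.
  - move=> z hz [_]; apply; apply: Wge; lia.
  have -> : - e = 0 - e by rewrite sub0r.
  rewrite -cnt_shift; apply: cnt_ext => z _; split.
    rewrite sub0r; case=> h1 h2; split; first split; [exact: (WV z h1) | exact: h2 | exact: h1].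
  by rewrite sub0r; case=> -[_ h1] h2; split.
have J2pos : forall z, vset v J2 z -> 0 < z.
  move=> z [_ [[a [b [Ca [b' [Rb' ->]] ->]]] nz <-]].
  have : 1 <= v (a + x * b').
    apply: vDge => //.
      case: (eqVneq a 0) => [->|a0]; [by left | right; have := Cval a Ca a0; lia].
    case: (eqVneq b' 0) => [->|b0]; first by left; rewrite mulr0.
    right; rewrite vM // vx; have := Rval hRv Rb' b0; lia.
  lia.
have Tw : forall z, T z -> 0 <= z < c.
  move=> z [->|[i hi ->]]; first by lia.
  by have [_ h1 h2] := yprop i hi; lia.
have cntT : k = cnt T 0 QE.
  rewrite hk' (@cnt_widen T 0 (absz c) QE); last 2 first.
  - rewrite /QE; nia.
  - by move=> z hz /Tw; lia.
  apply: cnt_ext => z hz; split.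
    case=> Wz nJ; case: (eqVneq z 0) => [->|z0]; first by left.
    by right; apply/hy.
  case=> [->|hz']; first by split => // /J2pos; lia.
  by have [h1 [h2 _]] := (proj2 (hy z)) hz'; split.
have ST : forall z, S z -> T z.
  move=> z [Wz nx]; case: (eqVneq z 0) => [->|z0]; first by left.
  right; apply/hy; split => //; split => // hJ; apply: nx; exact: vset_mono J2xRm hJ.
have part1 : r%:Z = e - k%:Z <-> (forall z, S z <-> T z).
  split.
    move=> hre.
    have ceq : cnt S 0 QE = cnt T 0 QE by rewrite -cntT; lia.
    move=> z; split; first exact: ST.
    move=> Tz; apply: (cnt_eq_sub (P := S) (Q := T) (lo := 0) (n := QE)) => //.
      by move=> w _; exact: ST.
    by have := Tw z Tz; rewrite /QE; nia.
  move=> hST; have : cnt S 0 QE = cnt T 0 QE by apply: cnt_ext => z _; exact: hST.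
  rewrite -cntT; lia.
have notB : forall i, (1 <= i <= k.-1)%N -> S (y i) -> y i + y 1%N < c + e.
  move=> i hi [Wy nx]; rewrite ltNge; apply/negP => h; apply: nx; apply: Blem => //.
have k11 : (1 <= k.-1)%N by lia.
have hl1 := hl 1%N (ltac:(by rewrite leqnn k11)).
have hlk := hl k.-1 (ltac:(by rewrite k11 leqnn)).
split.
- exact: part1.
- move=> hre.
  have h2 : (2 <= cnt S 0 QE)%N by lia.
  have [z [hz [Sz z0]]] := cnt_nonzero h2.
  case: (ST z Sz) => [ez|[i hi ezi]]; first by case: z0.
  have y1c2 : 2 * y 1%N < c + e.
    rewrite ltNge; apply/negP => h.
    have := notB i hi (ltac:(by rewrite -ezi)); have := ymono1 i hi; lia.
  case: hl1 => _ _ hc1.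
  have [a1 a2] := arith1 e0 hp1 hp2 hc1 hc1 (ltac:(lia)).
  by split => //; [lia | move=> hp; apply: a2; lia].
- move=> hre; have hST := proj1 part1 hre.
  have yj : forall j, (1 <= j <= k.-1)%N -> y 1%N + y j < c + e.
    move=> j hj; have : S (y j) by apply/hST; right; exists j.
    by move/(notB j hj); lia.
  case: hl1 => _ _ hc1; case: hlk => _ _ hck.
  have [a1 a2] := arith1 e0 hp1 hp2 hc1 hck (yj k.-1 (ltac:(by rewrite k11 leqnn))).
  by split.
- move=> hp3 i hi li0; have [_ _ hci] := hl i hi; rewrite li0 in hci.
  exact: arith2 e0 hp3 hp2 hci.
Qed.
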